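(* Assume the following statement holds: for every base $b>2$, every integer $n$ with $1<n<b$, and every symmetric $(n,b)$-palintiple with carries $c_k,\ldots,c_0$, one has $c_j\equiv 0 \pmod{n-1}$ for all $0\le j\le k$. Then, for integers $b>2$ and $1<n<b$, an $(n,b)$-palintiple is symmetric if and only if $n+1$ divides $b$.
   Context: Let $b>2$ be an integer base and write $(d_k,d_{k-1},\ldots,d_0)_b=\sum_{j=0}^k d_j b^j$ with $0\le d_j<b$. A natural number $p=(d_k,\ldots,d_0)_b$ with $d_k\neq 0$ and $d_0\neq 0$ that is not a base-$b$ palindrome is an $(n,b)$-palintiple if $(d_k,\ldots,d_0)_b=n\,(d_0,d_1,\ldots,d_k)_b$ for an integer $n$ with $1<n<b$. Its carries $c_0,\ldots,c_{k+1}$ are the carries arising in the base-$b$ multiplication of $(d_0,\ldots,d_k)_b$ by $n$: $c_0=0$ and $n d_{k-j}+c_j=d_j+b\,c_{j+1}$ for $0\le j\le k$ (so $c_{k+1}=0$). The palintiple is symmetric if $c_j=c_{k-j}$ for all $0\le j\le k$, shifted-symmetric if $c_j=c_{k-j+1}$ for all $0\le j\le k$, and asymmetric if it is neither. *)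

(* Defs.v *)
From mathcomp Require Import all_boot.
Set Implicit Arguments. Unset Strict Implicit. Unset Printing Implicit Defensive.

(* A number with base-b digits d_k ... d_0 is represented by k and d : nat -> nat
   (only d 0, ..., d k matter).  Value (d_k,...,d_0)_b = sum_{j<=k} d_j b^j. *)
Definition digval (b k : nat) (d : nat -> nat) : nat :=
  \sum_(j < k.+1) d j * b ^ j.

Definition revval (b k : nat) (d : nat -> nat) : nat :=
  \sum_(j < k.+1) d (k - j) * b ^ j.

(* Carries of the base-b multiplication of (d_0,...,d_k)_b by n:
   c_0 = 0 and n d_{k-j} + c_j = (digit) + b c_{j+1}, i.e.
   c_{j+1} = (n d_{k-j} + c_j) div b. *)
Fixpoint carry (n b k : nat) (d : nat -> nat) (j : nat) : nat :=
  match j with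
  | 0 => 0
  | j'.+1 => (n * d (k - j') + carry n b k d j') %/ b
  end.

Definition palintiple (n b k : nat) (d : nat -> nat) : Prop :=
  [/\ 1 < n < b,
      (forall j, j <= k -> d j < b),
      d k <> 0 /\ d 0 <> 0,
      (exists j, j <= k /\ d j <> d (k - j))
    & digval b k d = n * revval b k d].

Definition symmetric_pal (n b k : nat) (d : nat -> nat) : Prop :=
  forall j, j <= k -> carry n b k d j = carry n b k d (k - j).

(* Main.v *)
Require Import Defs.
From mathcomp Require Import all_boot.
From mathcomp Require Import zify.

Lemma mulpart (n b k : nat) (d : nat -> nat) m :
  n * \sum_(j < m) d (k - j) * b ^ j =
  \sum_(j < m) ((n * d (k - j) + carry n b k d j) %% b) * b ^ j
  + carry n b k d m * b ^ m.
Proof.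
elim: m => [|m IH]; first by rewrite !big_ord0 /= muln0.
rewrite !big_ord_recr /= mulnDr IH -!addnA; congr (_ + _).
have := divn_eq (n * d (k - m) + carry n b k d m) b.
set x := n * d (k - m) + carry n b k d m.
rewrite expnS.
set y := b ^ m. set q := x %/ b. set r := x %% b. rewrite /x. nia.
Qed.

Lemma uniq_digits b m (x y : nat -> nat) : 0 < b ->
  (forall j, j < m -> x j < b) -> (forall j, j < m -> y j < b) ->
  \sum_(j < m) x j * b ^ j = \sum_(j < m) y j * b ^ j ->
  forall j, j < m -> x j = y j.
Proof.
move=> b0; elim: m x y => [|m IH] x y Hx Hy E j Hj //.
move: E; rewrite !big_ord_recl /= !muln1.
have sh : forall z : nat -> nat, \sum_(i < m) z (bump 0 i) * b ^ bump 0 i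
   = b * \sum_(i < m) z i.+1 * b ^ i.
  move=> z; rewrite big_distrr /=; apply: eq_bigr => i _.
  by rewrite /bump /= add1n expnS mulnCA.
rewrite !sh => E.
have x0 : x 0 = y 0.
  have := congr1 (modn^~ b) E; rewrite ![_ + b * _]addnC ![b * _]mulnC !modnMDl.
  by rewrite !modn_small ?Hx ?Hy.
case: j Hj => [|j] Hj //.
apply: (IH (fun i => x i.+1) (fun i => y i.+1)) => //.
- by move=> i Hi; apply: Hx.
- by move=> i Hi; apply: Hy.
- by move: E; rewrite x0 => /addnI /eqP; rewrite eqn_pmul2l // => /eqP.
Qed.

Lemma carry_lt n b k d j : 0 < b -> (forall i, i <= k -> d i < b) ->
  0 < n -> carry n b k d j < n.
Proof.
move=> b0 Hd n0; elim: j => [|j IH] //=.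
rewrite ltn_divLR //.
have := Hd (k - j) (leq_subr _ _). nia.
Qed.

Lemma key n b k d : 0 < b -> 0 < n -> n < b -> (forall i, i <= k -> d i < b) ->
  digval b k d = n * revval b k d ->
  (forall j, j <= k -> n * d (k - j) + carry n b k d j
       = carry n b k d j.+1 * b + d j) /\ carry n b k d k.+1 = 0.
Proof.
move=> b0 n0 nb Hd E.
rewrite /revval mulpart /digval in E.
pose x j := if j < k.+1 then d j else 0.
pose y j := if j < k.+1 then (n * d (k - j) + carry n b k d j) %% b
            else carry n b k d k.+1.
have U := @uniq_digits b k.+2 x y b0.
have Hx : forall j, j < k.+2 -> x j < b.
  by move=> j _; rewrite /x; case: ifP => // H; apply: Hd.
have Hy : forall j, j < k.+2 -> y j < b.
  move=> j _; rewrite /y; case: ifP => _; first by rewrite ltn_mod.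
  by apply: ltn_trans _ nb; apply: carry_lt.
have S : \sum_(j < k.+2) x j * b ^ j = \sum_(j < k.+2) y j * b ^ j.
  rewrite big_ord_recr [RHS]big_ord_recr /= /x /y !ltnn mul0n addn0.
  transitivity (\sum_(j < k.+1) d j * b ^ j).
    by apply: eq_bigr => i _; rewrite ltn_ord.
  rewrite E; congr (_ + _); apply: eq_bigr => i _; by rewrite ltn_ord.
have U' := U Hx Hy S.
split.
- move=> j Hj; have := U' j (leq_trans Hj (leqnSn _)).
  rewrite /x /y ltnS Hj /= => ->.
  by rewrite [LHS](divn_eq _ b).
- by have := U' k.+1 (ltnSn _); rewrite /x /y ltnn.
Qed.

Theorem corollary1 :
  (forall (b n k : nat) (d : nat -> nat),
      2 < b -> 1 < n < b -> palintiple n b k d -> symmetric_pal n b k d ->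
      forall j, j <= k -> carry n b k d j = 0 %[mod n.-1]) ->
  forall (b n k : nat) (d : nat -> nat),
    2 < b -> 1 < n < b -> palintiple n b k d ->
    (symmetric_pal n b k d <-> n.+1 %| b).
Proof.
move=> Hyp b n k d b2 /andP[n1 nb] P.
have P' := P; case: P' => _ Hd [dk0 d00] [j0 [j0k j0n]] E.
have b0 : 0 < b by lia.
have n0 : 0 < n by lia.
have [Ej Ck] := @key n b k d b0 n0 nb Hd E.
have Cl := fun j => @carry_lt n b k d j b0 Hd n0.
split.
- move=> Sym.
  have k1 : 1 <= k.
    case: (posnP k) => [k0|//]; exfalso; move: j0k j0n.
    by rewrite k0 leqn0 => /eqP ->; apply.
  have H1 := Hyp b n k d b2 (introT andP (conj n1 nb)) P Sym 1 k1.
  have E0 := Ej 0 (leq0n _).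
  have c00 : carry n b k d 0 = 0 by [].
  rewrite subn0 c00 addn0 in E0.
  have Ekk := Ej k (leqnn _).
  have ck0 : carry n b k d k = 0 by rewrite (Sym k (leqnn _)) subnn.
  rewrite subnn Ck ck0 mul0n add0n addn0 in Ekk.
  have c1 := Cl 1.
  move: (carry n b k d 1) H1 E0 c1 => c H1 E0 c1.
  clear Ej Cl Hyp P Sym Ck.
  destruct n as [|p]; first by [].
  rewrite /= in H1.
  have cq := divn_eq c p; rewrite H1 mod0n addn0 in cq.
  move: (c %/ p) cq => q cq.
  have pp : 0 < p by lia.
  have d0p : 0 < d 0 by lia.
  have q1 : q = 1.
    nia.
  rewrite q1 mul1n in cq.
  apply/dvdnP; exists (d 0).
  apply/eqP; rewrite -(eqn_pmul2l pp); apply/eqP.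
  rewrite cq -Ekk in E0. nia.
- case/dvdnP=> m bm j jk.
  have A := Ej j jk.
  have B := Ej (k - j) (leq_subr _ _).
  rewrite subKn // in B.
  set c1 := carry n b k d j in A *.
  set c2 := carry n b k d (k - j) in B *.
  have A' : d (k - j) * n.+1 + c1 = (m * carry n b k d j.+1) * n.+1 + (d j + d (k - j)).
    move: (carry n b k d j.+1) A => C A.
    have h : C * b = (m * C) * n.+1 by rewrite bm mulnA [C * m]mulnC.
    lia.
  have B' : d j * n.+1 + c2 = (m * carry n b k d (k - j).+1) * n.+1 + (d j + d (k - j)).
    move: (carry n b k d (k - j).+1) B => C B.
    have h : C * b = (m * C) * n.+1 by rewrite bm mulnA [C * m]mulnC.
    lia.
  have := congr1 (modn^~ n.+1) A'; have := congr1 (modn^~ n.+1) B'.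
  rewrite /= !modnMDl => <-.
  rewrite !modn_small //; [exact: leqW (Cl _) | exact: leqW (Cl _)].
Qed.
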